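(* Let $n\geq 2$ and let $R$ be the unital associative ring $\langle x,y \mid x^n=0,\ y^n=0,\ xy+y^{n-1}x^{n-1}=1\rangle$. For $0\leq i,j<n$ put $a_{i,j}=y^ix^j-y^{i+1}x^{j+1}\in R$, and set $a_{i,j}=0$ whenever $i$ or $j$ lies outside $\{0,1,\dots,n-1\}$. Then for all $0\leq i,j<n$: $$a_{i,j}x=a_{i,j+1},\qquad a_{i,j}y=a_{i,j-1},\qquad xa_{i,j}=a_{i-1,j},\qquad ya_{i,j}=a_{i+1,j}.$$
   Context: $R$ denotes the quotient of the free unital associative ring $\mathbb{Z}\langle x,y\rangle$ by the two-sided ideal generated by $x^n$, $y^n$ and $xy+y^{n-1}x^{n-1}-1$; $x^0=y^0=1$. *)

(* Defs.v *)
From mathcomp Require Import all_boot all_order all_algebra.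
Set Implicit Arguments. Unset Strict Implicit. Unset Printing Implicit Defensive.
Import Order.TTheory GRing.Theory Num.Theory.
Local Open Scope ring_scope.

(* a_{i,j} = y^i x^j - y^(i+1) x^(j+1) for 0 <= i,j < n, and 0 otherwise.
   Indices are integers so that i-1, j-1 may be -1. *)
Definition acoef (R : pzRingType) (n : nat) (x y : R) (i j : int) : R :=
  if [&& (0 <= i)%R, (i < n%:Z)%R, (0 <= j)%R & (j < n%:Z)%R]
  then y ^+ `|i|%N * x ^+ `|j|%N - y ^+ (`|i|%N.+1) * x ^+ (`|j|%N.+1)
  else 0.

(* Main.v *)
Require Import Defs.
From mathcomp Require Import all_boot all_order all_algebra.
Import GRing.Theory.
Local Open Scope ring_scope.

Lemma acoefE (R : pzRingType) n (x y : R) (i j : nat) :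
  acoef n x y i j = if (i < n)%N && (j < n)%N then y ^+ i * (1 - y * x) * x ^+ j else 0.
Proof.
rewrite /acoef !ltz_nat !absz_nat !le0z_nat /=.
case: ifP => _ //.
by rewrite mulrBr mulr1 mulrBl [y ^+ i.+1]exprSr [x ^+ j.+1]exprS !mulrA.
Qed.

Lemma acoefN (R : pzRingType) n (x y : R) (j : int) : acoef n x y (-1) j = 0.
Proof. by rewrite /acoef. Qed.
Lemma acoefN' (R : pzRingType) n (x y : R) (j : int) : acoef n x y j (-1) = 0.
Proof. rewrite /acoef. case: (0 <= j) => //=; case: (j < n%:Z) => //. Qed.

Set Implicit Arguments.
Section S.
Variables (R : pzRingType) (m : nat) (x y : R).
Hypothesis xn : x ^+ m.+1 = 0.
Hypothesis yn : y ^+ m.+1 = 0.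
Hypothesis H : x * y + y ^+ m * x ^+ m = 1.

Lemma xyx : x * y * x = x.
Proof.
have := congr1 (fun z => z * x) H; rewrite /= mul1r mulrDl -(mulrA _ (x ^+ m)) -exprSr xn.
by rewrite mulr0 addr0.
Qed.

Lemma yxy : y * x * y = y.
Proof.
have := congr1 (fun z => y * z) H; rewrite /= mulr1 mulrDr !mulrA -exprS yn.
by rewrite mul0r addr0.
Qed.

Lemma fy : (1 - y * x) * y = 0.
Proof. by rewrite mulrBl mul1r yxy subrr. Qed.

Lemma xf : x * (1 - y * x) = 0.
Proof. by rewrite mulrBr mulr1 !mulrA xyx subrr. Qed.

Lemma xy1 : x * y = 1 - y ^+ m * x ^+ m.
Proof. by rewrite -H addrK. Qed.

Lemma Q k j : (k < j)%N -> (1 - y * x) * x ^+ k * y ^+ j = 0.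
Proof.
have F := fy.
move: (1 - y * x) F => f F.
elim: k j => [|k IH] [|j] //= hkj.
  by rewrite expr0 mulr1 exprS mulrA F mul0r.
case: (ltnP k m) => hkm; last first.
  have -> : x ^+ k.+1 = 0 by rewrite -(subnK (hkm : (m.+1 <= k.+1)%N)) exprD xn mulr0.
  by rewrite mulr0 mul0r.
have -> : f * x ^+ k.+1 * y ^+ j.+1 = f * x ^+ k * (x * y) * y ^+ j.
  by rewrite exprSr exprS !mulrA.
by rewrite xy1 mulrBr mulr1 mulrBl !mulrA IH // IH // !mul0r subr0.
Qed.

Lemma Q' k j : (k < j)%N -> x ^+ j * y ^+ k * (1 - y * x) = 0.
Proof.
have F := xf.
move: (1 - y * x) F => f F.
elim: k j => [|k IH] [|j] //= hkj.
  by rewrite expr0 mulr1 exprSr -mulrA F mulr0.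
case: (ltnP k m) => hkm; last first.
  have -> : y ^+ k.+1 = 0 by rewrite -(subnK (hkm : (m.+1 <= k.+1)%N)) exprD yn mulr0.
  by rewrite mulr0 mul0r.
have -> : x ^+ j.+1 * y ^+ k.+1 * f = x ^+ j * (x * y) * (y ^+ k * f).
  by rewrite exprSr exprS !mulrA.
rewrite xy1 mulrBr mulr1 mulrBl mulrA IH //.
have -> : x ^+ j * (y ^+ m * x ^+ m) * (y ^+ k * f) = x ^+ j * y ^+ m * (x ^+ m * y ^+ k * f) by rewrite !mulrA.
by rewrite IH // mulr0 subr0.
Qed.
End S.

From mathcomp Require Import zify.

Theorem lemma3 (R : pzRingType) (n : nat) (x y : R) :
  (2 <= n)%N ->
  x ^+ n = 0 -> y ^+ n = 0 -> x * y + y ^+ (n - 1) * x ^+ (n - 1) = 1 ->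
  forall i j : nat, (i < n)%N -> (j < n)%N ->
    [/\ acoef n x y i j * x = acoef n x y i (j%:Z + 1),
        acoef n x y i j * y = acoef n x y i (j%:Z - 1),
        x * acoef n x y i j = acoef n x y (i%:Z - 1) j
      & y * acoef n x y i j = acoef n x y (i%:Z + 1) j].
Proof.
move=> hn xn yn H i j hi hj.
case: n hn xn yn H hi hj => [//|m] _ xn yn H hi hj.
rewrite subn1 /= in H.
have aE := acoefE R m.+1 x y.
have S1 : forall k : nat, k%:Z + 1 = (k.+1)%:Z by move=> k; rewrite -addn1 PoszD.
have S2 : forall k : nat, (k.+1)%:Z - 1 = k%:Z by move=> k; rewrite -addn1 PoszD addrK.
split.
- rewrite S1 !aE hi hj /=.
  case hj1: (j.+1 < m.+1)%N; first by rewrite exprSr mulrA.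
  have ej : j = m by lia.
  by rewrite ej -mulrA -exprSr xn mulr0.
- case: j hj => [|j] hj.
  by rewrite acoefN' aE hi hj /= expr0 mulr1 -mulrA (fy _ _ _ _ yn H) mulr0.
  rewrite S2 !aE hi hj /= (ltnW hj).
  rewrite exprSr -!mulrA (xy1 _ _ _ _ H) mulrBr mulr1 mulrBr mulrDr.
  have -> : (1 - y * x) * (x ^+ j * (y ^+ m * x ^+ m)) = (1 - y * x) * x ^+ j * y ^+ m * x ^+ m.
    by rewrite !mulrA.
  by rewrite (Q _ _ _ _ xn yn H) // mul0r oppr0 mulr0 addr0.
- case: i hi => [|i] hi.
  by rewrite acoefN aE hi hj /= expr0 mul1r mulrA (xf _ _ _ _ xn H) mul0r.
  rewrite S2 !aE hi hj (ltnW hi) /=.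
  rewrite exprS !mulrA (xy1 _ _ _ _ H) mulrBl mul1r mulrBl.
  have -> : y ^+ m * x ^+ m * y ^+ i * (1 - y * x) = y ^+ m * (x ^+ m * y ^+ i * (1 - y * x)).
    by rewrite !mulrA.
  by rewrite (Q' _ _ _ _ xn yn H) // mulr0 subr0.
- rewrite S1 !aE hi hj /=.
  case hi1: (i.+1 < m.+1)%N; first by rewrite exprS !mulrA.
  have ei : i = m by lia.
  by rewrite ei !mulrA -exprS yn !mul0r.
Qed.
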